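(* Let $n\ge4$, let $\mathbf A,\mathbf B\in\mathcal G_n$, let $f\colon\mathbf A\to\mathbf B$ be a homomorphism and let $\sigma\in\Sigma_n$. Then the following are equivalent: (1) $f$ is an embedding (injective); (2) for each $x\in D^\sigma(\mathbf A)$ there exists $y\in D^\sigma(\mathbf B)$ such that $y\circ f\simeq^\sigma_{D^\sigma(\mathbf A)}x$.
   Context: $\mathbf C_n$ is the Heyting algebra on the chain $\{0<1<\dots<n-1\}$, with min, max, $\bot=0$, $\top=n-1$, $a\to b=\top$ if $a\le b$, $a\to b=b$ if $b<a$. $\mathcal G_n$ is the class of algebras isomorphic to subalgebras of direct powers of $\mathbf C_n$; $\mathcal G_n(\mathbf A,\mathbf C_n)$ is the set of Heyting homomorphisms $\mathbf A\to\mathbf C_n$. For $n\ge4$: for $1\le i\le n-2$, $h_i$ is the endomorphism of $\mathbf C_n$ with $h_i(k)=k+1$ if $i\le k<n-1$ and $h_i(k)=k$ otherwise. For $1\le i\le n-3$, $g_i$ is the partial map with domain $C_n\setminus\{i\}$ with $g_i(i+1)=i$, $g_i(k)=k$ for $k\notin\{i,i+1\}$, and $f_i\colon C_n\setminus\{i+1\}\to C_n\setminus\{i\}$ is its inverse. $\Sigma_n=\{f_1,g_1\}\times\dots\times\{f_{n-3},g_{n-3}\}\times\{h_1,\dots,h_{n-2}\}$, elements written $\sigma=(\sigma_1,\dots,\sigma_{n-2})$. $D^\sigma(\mathbf A)$ is $\mathcal G_n(\mathbf A,\mathbf C_n)$ with lifted (partial) operations $\sigma_i^{\mathbf X}(x)=\sigma_i\circ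 x$, defined iff $\operatorname{ran}x\subseteq\operatorname{dom}\sigma_i$. For $\mathbf X=D^\sigma(\mathbf A)$, $x\simeq^\sigma_{\mathbf X}y$ iff $x=y$ or there is a finite sequence $x=z_0,\dots,z_N=y$ in $X$ such that for each $j<N$ some $i_j\in\{1,\dots,n-3\}$ satisfies $z_{j+1}=\sigma_{i_j}^{\mathbf X}(z_j)$ or $z_j=\sigma_{i_j}^{\mathbf X}(z_{j+1})$. *)

(* Defs.v *)
From HB Require Import structures.
From mathcomp Require Import all_boot.
From Stdlib Require Import Relations.
Set Implicit Arguments. Unset Strict Implicit. Unset Printing Implicit Defensive.

Record halg := HAlg {
  car :> Type;
  hmeet : car -> car -> car;
  hjoin : car -> car -> car;
  himp  : car -> car -> car;
  hbot  : car;
  htop  : car }.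

Definition is_hom (A B : halg) (f : A -> B) : Prop :=
  [/\ forall a b, f (hmeet a b) = hmeet (f a) (f b),
      forall a b, f (hjoin a b) = hjoin (f a) (f b),
      forall a b, f (himp a b) = himp (f a) (f b),
      f (hbot A) = hbot B &
      f (htop A) = htop B].

(* The chain C_n on {0 < 1 < ... < n-1}; the carrier is 'I_(n.-1.+1),
   which has exactly n elements whenever n >= 1. *)
Definition Cmeet n (a b : 'I_n.-1.+1) : 'I_n.-1.+1 := if a <= b then a else b.
Definition Cjoin n (a b : 'I_n.-1.+1) : 'I_n.-1.+1 := if a <= b then b else a.
Definition Cimp n (a b : 'I_n.-1.+1) : 'I_n.-1.+1 := if a <= b then ord_max else b.
Definition C (n : nat) : halg :=
  @HAlg 'I_n.-1.+1 (@Cmeet n) (@Cjoin n) (@Cimp n) ord0 ord_max.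

Definition Pow (A : halg) (I : Type) : halg :=
  @HAlg (I -> A) (fun f g i => hmeet (f i) (g i)) (fun f g i => hjoin (f i) (g i))
        (fun f g i => himp (f i) (g i)) (fun _ => hbot A) (fun _ => htop A).

(* A is in G_n iff A is isomorphic to a subalgebra of some direct power of C_n,
   i.e. there is an injective homomorphism of A into some (C_n)^I. *)
Definition inG (n : nat) (A : halg) : Prop :=
  exists (I : Type) (e : A -> Pow (C n) I), is_hom e /\ injective e.

Definition fmap (i k : nat) : option nat :=
  if k == i.+1 then None else if k == i then Some i.+1 else Some k.
Definition gmap (i k : nat) : option nat :=
  if k == i then None else if k == i.+1 then Some i else Some k.
Definition hmap (n i k : nat) : nat :=
  if (i <= k) && (k < n.-1) then k.+1 else k.

(* sigma = (sigma_1, ..., sigma_{n-2}) in Sigma_n: the ffun gives, for the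
   component i = j+1 (j : 'I_(n-3)), true for f_i and false for g_i; the
   ordinal j : 'I_(n-2) encodes the last component h_{j+1}. *)
Definition Sigma (n : nat) : Type := ({ffun 'I_(n - 3) -> bool} * 'I_(n - 2))%type.

Definition sigma_comp (n : nat) (s : Sigma n) (i : nat) : nat -> option nat :=
  if i == 0 then fun _ => None else
  match @insub _ (fun j => j < n - 3) _ i.-1 with
  | Some j => if s.1 j then fmap i else gmap i
  | None => if i == n - 2 then fun k => Some (hmap n (nat_of_ord s.2).+1 k)
            else fun _ => None
  end.

(* y = sigma_i^X(x): the lifted partial operation is defined at x and yields y. *)
Definition lifted (n : nat) (s : Sigma n) (i : nat) (A : halg) (x y : A -> C n) : Prop :=
  forall a, sigma_comp s i (nat_of_ord (x a)) = Some (nat_of_ord (y a)).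

(* One step of the chain in X = D^sigma(A): both ends in X, and for some
   i in {1,...,n-3}, y = sigma_i^X(x) or x = sigma_i^X(y). *)
Definition sim_step (n : nat) (s : Sigma n) (A : halg) (x y : A -> C n) : Prop :=
  is_hom x /\ is_hom y /\
  exists i, 1 <= i <= n - 3 /\ (lifted s i x y \/ lifted s i y x).

Definition sim (n : nat) (s : Sigma n) (A : halg) : relation (A -> C n) :=
  clos_refl_trans (A -> C n) (@sim_step n s A).

(* Main.v *)
Require Import Defs.
From mathcomp Require Import all_boot.
From Stdlib Require Import Relations ClassicalEpsilon Classical FunctionalExtensionality.
From mathcomp Require Import zify.
Set Implicit Arguments. Unset Strict Implicit. Unset Printing Implicit Defensive.

Section Basics.
Variable n : nat.
Local Notation T := 'I_n.-1.+1.

Lemma hom_meet (A : halg) (z : A -> C n) : is_hom z -> forall a b, z (hmeet a b) = Cmeet (z a) (z b).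
Proof. by case. Qed.
Lemma hom_join (A : halg) (z : A -> C n) : is_hom z -> forall a b, z (hjoin a b) = Cjoin (z a) (z b).
Proof. by case. Qed.
Lemma hom_imp (A : halg) (z : A -> C n) : is_hom z -> forall a b, z (himp a b) = Cimp (z a) (z b).
Proof. by case. Qed.
Lemma hom_bot (A : halg) (z : A -> C n) : is_hom z -> z (hbot A) = ord0.
Proof. by case. Qed.
Lemma hom_top (A : halg) (z : A -> C n) : is_hom z -> z (htop A) = ord_max.
Proof. by case. Qed.

Lemma eq_max (k : T) : (k == ord_max) = (n.-1 <= k).
Proof.
apply/eqP/idP => [->|h] //=. apply: val_inj => /=. have := ltn_ord k. lia.
Qed.

Lemma Cimp_top (k k' : T) : (Cimp k k' == ord_max) = (k <= k').
Proof.
rewrite /Cimp; case: leqP => h; first by rewrite eqxx.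
rewrite eq_max. have := ltn_ord k. lia.
Qed.

Lemma relabel_hom (A : halg) (z : A -> C n) (psi : T -> T) : is_hom z ->
  psi ord0 = ord0 -> psi ord_max = ord_max ->
  (forall a b, z a <= z b -> psi (z a) <= psi (z b)) ->
  (forall a b, z b < z a -> psi (z a) <= psi (z b) -> psi (z b) = ord_max) ->
  @is_hom A (C n) (fun a => psi (z a)).
Proof.
move=> hz p0 pm mono st; split => [a b|a b|a b||] /=.
- rewrite (hom_meet hz) /Cmeet. case: leqP => h; first by rewrite mono.
  have h2 := mono _ _ (ltnW h). case: leqP => h3 //.
  apply: val_inj; apply/eqP; by rewrite eqn_leq ?h2 ?h3. 
- rewrite (hom_join hz) /Cjoin. case: leqP => h; first by rewrite mono.
  have h2 := mono _ _ (ltnW h). case: leqP => h3 //.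
  apply: val_inj; apply/eqP; by rewrite eqn_leq ?h2 ?h3.
- rewrite (hom_imp hz) /Cimp. case: leqP => h; first by rewrite mono.
  case: leqP => h3 //. by rewrite (st _ _ h h3).
- by rewrite (hom_bot hz).
- by rewrite (hom_top hz).
Qed.

Lemma comp_hom (A B : halg) (f : A -> B) (y : B -> C n) :
  is_hom f -> is_hom y -> @is_hom A (C n) (fun a => y (f a)).
Proof.
case=> fm fj fi fb ft hy; split => [a b|a b|a b||] /=.
- by rewrite fm (hom_meet hy).
- by rewrite fj (hom_join hy).
- by rewrite fi (hom_imp hy).
- by rewrite fb (hom_bot hy).
- by rewrite ft (hom_top hy).
Qed.

Lemma proj_hom (A : halg) (I : Type) (e : A -> Defs.Pow (C n) I) (i : I) :
  is_hom e -> @is_hom A (C n) (fun a => e a i).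
Proof.
case=> em ej ei eb et; split => [a b|a b|a b||] /=.
- by rewrite em.
- by rewrite ej.
- by rewrite ei.
- by rewrite eb.
- by rewrite et.
Qed.

Definition collapse (t : nat) (k : T) : T := if t <= k then ord_max else k.

Lemma collapse_hom (A : halg) (z : A -> C n) t : is_hom z -> 0 < t ->
  @is_hom A (C n) (fun a => collapse t (z a)).
Proof.
move=> hz t0; have := @relabel_hom A z (collapse t) hz; apply.
- by rewrite /collapse leqNgt t0.
- rewrite /collapse; case: leqP => //.
- move=> a b h; rewrite /collapse; case: (leqP t (z a)) => h1; case: (leqP t (z b)) => h2 //=.
  + have := ltn_ord (z b). lia.
  + have := ltn_ord (z a). lia.
- move=> a b h; rewrite /collapse; case: (leqP t (z b)) => h2 //.
  have := ltn_ord (z a). case: (leqP t (z a)) => h1 /= ? hh; lia.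
Qed.

End Basics.
Section Sim.
Variable n : nat.
Variable s : Sigma n.
Local Notation T := 'I_n.-1.+1.

Lemma sigma_comp_mid (i : nat) : 1 <= i <= n - 3 ->
  sigma_comp s i = fmap i \/ sigma_comp s i = gmap i.
Proof.
move=> /andP[h1 h2]. rewrite /sigma_comp.
have -> : (i == 0) = false by case: i h1 h2.
case: insubP => [j _ _ | H]; first by case: (s.1 j); [left|right].
exfalso; move/negP: H; apply; lia.
Qed.

Lemma fmap_inj i k k' m : fmap i k = Some m -> fmap i k' = Some m -> k = k'.
Proof.
rewrite /fmap; do 4 (case: eqP => ? //); move=> [] ? [] ?; lia.
Qed.

Lemma gmap_inj i k k' m : gmap i k = Some m -> gmap i k' = Some m -> k = k'.
Proof.
rewrite /gmap; do 4 (case: eqP => ? //); move=> [] ? [] ?; lia.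
Qed.

Lemma lifted_eq (A : halg) (sg : nat -> option nat)
  (inj : forall k k' m, sg k = Some m -> sg k' = Some m -> k = k')
  (z z' : A -> C n) a b :
  (forall a, sg (z a) = Some (nat_of_ord (z' a))) ->
  ((z a : nat) = z b <-> (z' a : nat) = z' b).
Proof.
move=> L; split => e.
- by have := L a; rewrite e L => -[].
- apply: (inj _ _ (z' a)); first exact: L. by rewrite e L.
Qed.

Lemma sim_eq (A : halg) (z z' : A -> C n) a b : sim s z z' ->
  ((z a : nat) = z b <-> (z' a : nat) = z' b).
Proof.
elim => {z z'} [z z' st| z | z1 z2 z3 _ IH1 _ IH2] //.
- case: st => _ [_ [i [hi [L|L]]]];
  have [E|E] := sigma_comp_mid hi; rewrite /lifted E in L.
  + exact: (lifted_eq (@fmap_inj i)).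
  + exact: (lifted_eq (@gmap_inj i)).
  + by apply: iff_sym; apply: (lifted_eq (@fmap_inj i)).
  + by apply: iff_sym; apply: (lifted_eq (@gmap_inj i)).
- by rewrite IH1.
Qed.

Lemma step_sym (A : halg) (z z' : A -> C n) : sim_step s z z' -> sim_step s z' z.
Proof. by case=> h1 [h2 [i [hi [L|L]]]]; split => //; split => //; exists i; split => //; [right|left]. Qed.

Lemma sim_sym (A : halg) (z z' : A -> C n) : sim s z z' -> sim s z' z.
Proof.
elim => {z z'} [z z' st| z | z1 z2 z3 _ IH1 _ IH2].
- by apply: rt_step; apply: step_sym.
- exact: rt_refl.
- exact: rt_trans IH2 IH1.
Qed.

Definition ordeq (A : halg) (u x : A -> C n) := forall a b, (u a <= u b) = (x a <= x b).
Definition packed (A : halg) (z : A -> C n) :=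
  forall a, 1 < z a -> z a < n.-1 -> exists a', (z a' : nat) = (z a).-1.

Definition inim (A : halg) (z : A -> C n) (k : T) : bool :=
  if excluded_middle_informative (exists a, z a = k) then true else false.
Lemma inimP (A : halg) (z : A -> C n) k : reflect (exists a : A, z a = k) (inim z k).
Proof. rewrite /inim; case: excluded_middle_informative => h; by constructor. Qed.
Definition meas (A : halg) (z : A -> C n) := \sum_(k : T) inim z k * k.

End Sim.
Section Norm.
Variable n : nat.
Variable s : Sigma n.
Local Notation T := 'I_n.-1.+1.

Lemma move_step (A : halg) (z : A -> C n) (a0 : A) : is_hom z ->
  1 < z a0 -> z a0 < n.-1 -> (forall a, (z a : nat) != (z a0).-1) ->
  exists z' : A -> C n, [/\ is_hom z', sim_step s z z', meas z' < meas z & ordeq z z'].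
Proof.
move=> hz h1 h2 hn.
set v := z a0 in h1 h2 hn *.
set w : T := inord (v : nat).-1.
have wv : (w : nat) = v.-1 by rewrite inordK //; have := ltn_ord v; lia.
pose psi (k : T) : T := if (k : nat) == v then w else k.
have pv : forall k, (psi k : nat) = if (k : nat) == v then v.-1 else k.
  by move=> k; rewrite /psi; case: eqP.
have hnz : forall a, (z a : nat) <> v.-1 by move=> a; apply/eqP.
have mono : forall a b, (z a <= z b) = (psi (z a) <= psi (z b)).
  move=> a b; rewrite !pv; have := hnz a; have := hnz b.
  case: eqP => ea; case: eqP => eb ? ?; apply/idP/idP; lia.
have strict : forall a b, (z a < z b) = (psi (z a) < psi (z b)).
  by move=> a b; rewrite !ltnNge mono.
have hz' : @is_hom A (C n) (fun a => psi (z a)).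
  apply: (@relabel_hom n A z psi) => //.
  + apply: val_inj; rewrite /= pv /=; case: eqP => //; lia.
  + apply: val_inj; rewrite /= pv /=; case: eqP => //; lia.
  + by move=> a b; rewrite mono.
  + by move=> a b; rewrite strict ltnNge => /negP.
exists (fun a => psi (z a)); split => //.
- split => //; split => //; exists v.-1; split; first by lia.
  have hi : 1 <= v.-1 <= n - 3 by lia.
  have [E|E] := sigma_comp_mid s hi.
  + right => a; rewrite E /fmap /= pv; have := hnz a.
    case: ((z a : nat) =P v) => e hza; rewrite ?e ?eqxx;
    repeat (case: eqP => ?); try congr Some; lia.
  + left => a; rewrite E /gmap /= pv; have := hnz a.
    case: ((z a : nat) =P v) => e hza; rewrite ?e ?eqxx;
    repeat (case: eqP => ?); try congr Some; lia.
- have imv : inim z v by apply/inimP; exists a0.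
  have imw : ~~ inim z w.
    by apply/inimP => -[a ea]; apply: (hnz a); rewrite ea wv.
  have im'v : ~~ inim (fun a => psi (z a)) v.
    apply/inimP => -[a ea]; have := pv (z a); rewrite ea; case: eqP => e; lia.
  have im'w : inim (fun a => psi (z a)) w.
    apply/inimP; exists a0; apply: val_inj; by rewrite /= pv eqxx wv.
  have wnv : w != v.
    apply/eqP => e; have : (w : nat) = v by rewrite e.
    rewrite wv; lia.
  have oth : forall k, (k != v) && (k != w) ->
      inim (fun a => psi (z a)) k = inim z k.
    move=> k /andP[/eqP kv /eqP kw].
    apply/inimP/inimP => -[a ea]; exists a; apply: val_inj.
    + have := pv (z a); rewrite ea /=; case: eqP => e e2.
      * exfalso; apply: kw; apply: val_inj; by rewrite /= e2 wv.
      * by rewrite /= e2.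
    + rewrite /= pv ea; case: eqP => // e; exfalso; apply: kv; exact: val_inj.
  rewrite /meas (bigD1 v) //= (negbTE im'v) mul0n add0n (bigD1 w) //= im'w mul1n.
  rewrite [X in _ < X](bigD1 v) //= imv mul1n [X in _ < _ + X](bigD1 w) //= (negbTE imw) mul0n add0n.
  rewrite (eq_bigr (fun k => inim z k * k)); last by move=> k /oth ->.
  rewrite wv; lia.
Qed.

Lemma normalize (A : halg) (z : A -> C n) : is_hom z ->
  exists z', [/\ is_hom z', packed z', sim s z z' & ordeq z z'].
Proof.
move=> hz; have [m hm] := ubnP (meas z); elim: m z hz hm => // m IH z hz hm.
have [pz|npz] := classic (packed z).
  exists z; split => //; try exact: rt_refl; by move=> a b.
have [a0 [h1 h2 h3]] : exists a0, [/\ 1 < z a0, z a0 < n.-1 &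
    forall a, (z a : nat) != (z a0).-1].
  apply: NNPP => H; apply: npz => a ha hb; apply: NNPP => H2; apply: H.
  exists a; split => // a'; apply/eqP => e; apply: H2; by exists a'.
have [z' [hz' st lt od]] := move_step hz h1 h2 h3.
have [z'' [hz'' pz'' sim'' od'']] := IH z' hz' (leq_trans lt hm).
exists z''; split => //.
- apply: rt_trans; [apply: rt_step; exact: st | exact: sim''].
- by move=> a b; rewrite od od''.
Qed.

End Norm.
Section Uniq.
Variable n : nat.
Local Notation T := 'I_n.-1.+1.

Lemma packed_down (A : halg) (z : A -> C n) : is_hom z -> packed z ->
  forall a, z a < n.-1 -> forall w, w <= z a -> exists a', (z a' : nat) = w.
Proof.
move=> hz pz a ha w hw.
suff H : forall d, d <= z a -> exists a', (z a' : nat) = z a - d.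
  have [a' e] := H (z a - w) (leq_subr _ _). exists a'; rewrite e; lia.
elim => [|d IH] hd; first by exists a; rewrite subn0.
have [a' e] := IH (ltnW hd).
case: (ltnP 1 (z a')) => h1.
  have [a'' e''] := pz a' h1 ltac:(lia). exists a''; lia.
exists (hbot A); rewrite (hom_bot hz) /=; lia.
Qed.

Lemma half (A : halg) (u x : A -> C n) : is_hom u -> is_hom x -> packed u ->
  packed x -> ordeq u x -> forall w,
  (forall w', w' < w -> forall a, ((x a : nat) = w' \/ (u a : nat) = w') ->
     w' < n.-1 -> u a = x a) ->
  forall a, (x a : nat) = w -> w < n.-1 -> u a = x a.
Proof.
move=> hu hx pu px od w IH a xa wn.
have ua : u a < n.-1.
  have := od (htop A) a; rewrite (hom_top hu) (hom_top hx) /= xa.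
  rewrite [X in _ = X]leqNgt wn /=; move/negbT; rewrite -ltnNge //.
apply: val_inj => /=; rewrite xa.
case: w IH xa wn => [|w] IH xa wn.
  have := od a (hbot A); rewrite (hom_bot hu) (hom_bot hx) /= xa leqnn.
  move/idP; lia.
have [a' xa'] := packed_down hx px (a:=a) ltac:(lia) (w := w) ltac:(lia).
have ua' := IH w (ltnSn w) a' (or_introl xa') ltac:(lia).
have h1 : w < u a.
  have := od a a'; rewrite xa xa' ltnn ua' xa' leqNgt => /negbFE; lia.
case: (ltnP w.+1 (u a)) => h2; last by lia.
have [a'' ua''] := packed_down hu pu (a := a) ua (w := w.+1) (ltnW h2).
have hx'' : x a'' < w.+1.
  have := od a a''; rewrite ua'' xa leqNgt h2 /= => /esym/negbT; lia.
have := IH (x a'') hx'' a'' (or_introl erefl) ltac:(lia). 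
move=> /(congr1 val) /=; lia.
Qed.

Lemma packed_unique (A : halg) (u x : A -> C n) : is_hom u -> is_hom x ->
  packed u -> packed x -> ordeq u x -> u = x.
Proof.
move=> hu hx pu px od.
have od' : ordeq x u by move=> a b; rewrite od.
suff H : forall w a, ((x a : nat) = w \/ (u a : nat) = w) -> w < n.-1 -> u a = x a.
  apply: functional_extensionality => a.
  case: (ltnP (x a) n.-1) => h; first by apply: (H (x a)); [left|].
  have := od (htop A) a; rewrite (hom_top hu) (hom_top hx) /= h.
  have := ltn_ord (x a); have := ltn_ord (u a) => ? ? hh.
  apply: val_inj => /=; lia.
elim/ltn_ind => w IH a [] e wn.
- exact: (half hu hx pu px od IH).
- apply: esym; apply: (half hx hu px pu od' _ e wn).
  move=> w' hw' a' h' wn'; apply: esym; apply: (IH w' hw' a' _ wn'); by case: h'; [right|left].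
Qed.

End Uniq.
From mathcomp Require Import boolp classical_sets filter.
Local Open Scope classical_set_scope.

Section Ext.
Variable n : nat.
Local Notation T := 'I_n.-1.+1.

Lemma separate (A B : halg) (f : A -> B) (hf : is_hom f) (finj : injective f)
  (HB : inG n B) (x : A -> C n) (hx : is_hom x) a c :
  x a = ord_max -> x c <> ord_max ->
  exists z : B -> C n, [/\ is_hom z, z (f a) = ord_max & z (f c) <> ord_max].
Proof.
move=> xa xc.
have h1 : himp a c <> htop A.
  move=> e; have := hom_imp hx a c; rewrite e (hom_top hx) xa /Cimp.
  case: leqP => h; last by move=> e2; apply: xc; rewrite -e2.
  move=> _; apply: xc; apply/eqP; rewrite eq_max; exact: h.
have h2 : f (himp a c) <> htop B.
  by move=> e; apply: h1; apply: finj; rewrite e; case: hf.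
case: HB => I [e [he einj]].
have [i hi] : exists i, e (f (himp a c)) i <> ord_max.
  apply: NNPP => H; apply: h2; apply: einj.
  have -> : e (htop B) = (fun _ => ord_max) by case: he.
  apply: functional_extensionality => i; apply: NNPP => H2; apply: H; by exists i.
pose z0 := fun b => e b i.
have hz0 : @is_hom B (C n) z0 by apply: proj_hom.
have lt : z0 (f c) < z0 (f a).
  have : z0 (f (himp a c)) <> ord_max by exact: hi.
  have -> : f (himp a c) = himp (f a) (f c) by case: hf.
  rewrite (hom_imp hz0) => /eqP; rewrite Cimp_top; lia.
exists (fun b => collapse (z0 (f a)) (z0 b)); split.
- apply: collapse_hom => //; lia.
- by rewrite /collapse leqnn.
- rewrite /collapse leqNgt lt /= => e2.
  have := ltn_ord (z0 (f a)); have : (z0 (f c) : nat) = n.-1 by rewrite e2.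
  lia.
Qed.

End Ext.
Section Ext2.
Variable n : nat.
Local Notation T := 'I_n.-1.+1.

Lemma Cmeet_max (k k' : T) : Cmeet k k' = ord_max -> k = ord_max /\ k' = ord_max.
Proof.
rewrite /Cmeet; have := ltn_ord k; have := ltn_ord k'.
case: (leqP k k') => h ? ? /eqP; rewrite eq_max => h2; split; apply/eqP; rewrite eq_max; lia.
Qed.

Lemma Cjoin_max (k k' : T) : k = ord_max \/ k' = ord_max -> Cjoin k k' = ord_max.
Proof.
rewrite /Cjoin; have := ltn_ord k; have := ltn_ord k'.
case: (leqP k k') => h ? ? [] e; rewrite e in h *; apply/eqP; rewrite eq_max //=; move: h => /= h; lia.
Qed.

Lemma extension (A B : halg) (f : A -> B) (hf : is_hom f) (finj : injective f)
  (HB : inG n B) (x : A -> C n) (hx : is_hom x) (n1 : 1 < n) :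
  exists y : B -> C n, is_hom y /\ forall a, (y (f a) = ord_max) <-> (x a = ord_max).
Proof.
pose H := {z : B -> C n | is_hom z}.
pose Ts (a : A) : set H := [set z | proj1_sig z (f a) = ord_max].
pose F0 : set_system H := [set S | exists a c,
  [/\ x a = ord_max, x c <> ord_max & Ts a `&` ~` Ts c `<=` S]].
have x0 : x (hbot A) <> ord_max.
  rewrite (hom_bot hx) => /(congr1 val) /=; lia.
have PF : ProperFilter F0.
  split.
  - move=> [a [c [xa xc sub]]].
    have [z [hz za zc]] := separate hf finj HB hx xa xc.
    exact: (sub (exist _ z hz)).
  - split.
    + exists (htop A), (hbot A); split => //; exact: hom_top.
    + move=> S1 S2 [a1 [c1 [xa1 xc1 s1]]] [a2 [c2 [xa2 xc2 s2]]].
      exists (hmeet a1 a2), (hjoin c1 c2); split.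
      * by rewrite (hom_meet hx) xa1 xa2 /Cmeet leqnn.
      * by rewrite (hom_join hx) /Cjoin; case: leqP.
      * move=> [z hz] [hm hj]; rewrite /Ts /= in hm hj.
        have hzf := comp_hom hf hz.
        have [m1 m2] : z (f a1) = ord_max /\ z (f a2) = ord_max.
          by apply: Cmeet_max; rewrite -hm (hom_meet hzf).
        have [n1' n2'] : z (f c1) <> ord_max /\ z (f c2) <> ord_max.
          by split => e; apply: hj; rewrite (hom_join hzf) Cjoin_max //; [left|right].
        by split; [apply: s1|apply: s2]; split; rewrite /Ts /=.
    + move=> P Q PQ [a [c [xa xc s]]]; exists a, c; split => //.
      exact: subset_trans s PQ.
have [G [UG FG]] := ultraFilterLemma PF.
have ex : forall b, exists v : T, G [set z : H | proj1_sig z b = v].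
  move=> b; apply: NNPP => nex.
  have Gc : forall v : T, G (~` [set z : H | proj1_sig z b = v]).
    move=> v; case: (in_ultra_setVsetC [set z : H | proj1_sig z b = v] UG) => // Gv.
    by exfalso; apply: nex; exists v.
  have Gk : forall k, k <= n.-1.+1 -> G [set z : H | k <= proj1_sig z b].
    elim => [|k IH] hk.
    + by apply: filterS filterT => z _ /=.
    + apply: (@filterS _ _ _ ([set z : H | k <= proj1_sig z b] `&`
          ~` [set z : H | proj1_sig z b = Ordinal hk])).
        move=> z [/= h1 h2]; rewrite ltn_neqAle h1 andbT.
        apply/eqP => e; apply: h2; apply: val_inj; by rewrite /= e.
      apply: filterI; [apply: IH; lia | exact: Gc].
  apply: (filter_not_empty G); apply: filterS (Gk _ (leqnn _)) => z /=.
  move=> h2; have := leq_trans (ltn_ord (proj1_sig z b)) h2; by rewrite ltnn.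
have uniq : forall b v v', G [set z : H | proj1_sig z b = v] ->
    G [set z : H | proj1_sig z b = v'] -> v = v'.
  move=> b v v' h1 h2; apply: NNPP => ne; apply: (filter_not_empty G).
  by apply: filterS (filterI h1 h2) => z [/= e1 e2]; apply: ne; rewrite -e1 -e2.
pose y b := proj1_sig (cid (ex b)).
have yP : forall b, G [set z : H | proj1_sig z b = y b].
  move=> b; exact: (proj2_sig (cid (ex b))).
have charac : forall b v, G [set z : H | proj1_sig z b = v] -> y b = v.
  move=> b v; exact: uniq (yP b).
exists y; split.
  split => [b b'|b b'|b b'||].
  - apply: charac; apply: filterS (filterI (yP b) (yP b')) => -[z hz] [/= e1 e2].
    by rewrite (hom_meet hz) e1 e2.
  - apply: charac; apply: filterS (filterI (yP b) (yP b')) => -[z hz] [/= e1 e2].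
    by rewrite (hom_join hz) e1 e2.
  - apply: charac; apply: filterS (filterI (yP b) (yP b')) => -[z hz] [/= e1 e2].
    by rewrite (hom_imp hz) e1 e2.
  - apply: charac; apply: filterS filterT => -[z hz] _ /=; exact: hom_bot.
  - apply: charac; apply: filterS filterT => -[z hz] _ /=; exact: hom_top.
move=> a; split => e.
- apply: NNPP => xa.
  have Gn : G (~` Ts a).
    apply: FG; exists (htop A), a; split; [exact: hom_top | exact: xa | by move=> z []].
  apply: (filter_not_empty G); apply: filterS (filterI Gn (yP (f a))).
  by move=> z [/= h1 h2]; apply: h1; rewrite /Ts /= h2 e.
- apply: charac; apply: FG; exists a, (hbot A); split; [exact: e | exact: x0 | by move=> z []].
Qed.

End Ext2.

Theorem lemma6p3 (n : nat) (A B : halg) (hn : 4 <= n)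
  (HA : inG n A) (HB : inG n B) (f : A -> B) (hf : is_hom f) (s : Sigma n) :
  injective f <->
  (forall x : A -> C n, is_hom x ->
     exists y : B -> C n, is_hom y /\ sim s (fun a => y (f a)) x).
Proof.
split.
- move=> finj x hx.
  have [y [hy ker]] := extension hf finj HB hx (ltac:(lia) : 1 < n).
  exists y; split => //.
  have hu := comp_hom hf hy.
  have od : ordeq (fun a => y (f a)) x.
    move=> a b; rewrite -!Cimp_top /=.
    have -> : Cimp (y (f a)) (y (f b)) = y (f (himp a b)) by rewrite (hom_imp hu).
    rewrite -(hom_imp hx).
    apply/eqP/eqP; [exact: (ker _).1 | exact: (ker _).2].
  have [u' [hu' pu' su' ou']] := normalize s hu.
  have [x' [hx' px' sx' ox']] := normalize s hx.
  have e : u' = x'.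
    apply: packed_unique hu' hx' pu' px' _.
    by move=> a b; rewrite -ou' od ox'.
  apply: rt_trans; first exact: su'.
  rewrite e; exact: sim_sym sx'.
- move=> H a b hab; apply: NNPP => ne.
  case: HA => I [e [he einj]].
  have [i hi] : exists i, e a i <> e b i.
    apply: NNPP => H2; apply: ne; apply: einj; apply: functional_extensionality => i.
    apply: NNPP => H3; apply: H2; by exists i.
  have hxi := proj_hom i he.
  have [y [hy sm]] := H _ hxi.
  have := (sim_eq a b sm).1; rewrite /= hab => /(_ erefl) e2; apply: hi; exact: val_inj.
Qed.
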